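(* Let $k\equiv5\pmod{10}$. Then $\operatorname{Ker}\nu_{G^k}=\{M\in\Gamma_{\theta,5}: M\equiv\pm\begin{pmatrix}1&0\\0&1\end{pmatrix}\pmod5\}$.
   Context: $\Gamma_{\theta,5}=\{M\in SL(2,\mathbb{Z}): M\equiv\pm\begin{pmatrix}1&0\\0&1\end{pmatrix}\text{ or }\pm\begin{pmatrix}0&-1\\1&0\end{pmatrix}\pmod 5\}$. For $M=\begin{pmatrix} a&b\\ c&d\end{pmatrix}\in\Gamma_{\theta,5}$ define $g(M)=\frac{6b}{5}+\frac{2ab}{5}+\frac{2cd}{5}$ if $M\equiv I$, $\frac{24b}{5}+\frac{2ab}{5}+\frac{2cd}{5}$ if $M\equiv -I$, $5+\frac{6d}{5}+\frac{2ab}{5}+\frac{2cd}{5}$ if $M\equiv\begin{pmatrix}0&-1\\1&0\end{pmatrix}$, $5-\frac{6d}{5}+\frac{2ab}{5}+\frac{2cd}{5}$ if $M\equiv\begin{pmatrix}0&1\\-1&0\end{pmatrix}$ (all mod 5). For $k\in\mathbb{Z}$, $\nu_{G^k}(M)=\exp\!\left(\frac{\pi i k}{5}g(M)\right)$; this is the multiplier system of $G^k$, where $G(\tau)=\eta^6(\tau)/\big(\theta\begin{bmatrix}3/5\\3/5\end{bmatrix}(0,\tau)\theta\begin{bmatrix}3/5\\7/5\end{bmatrix}(0,\tau)\big)$, i.e. $G^k(M\tau)=\nu_{G^k}(M)(c\tau+d)^{2k}G^k(\tau)$. $\operatorname{Ker}\nu_{G^k}=\{M\in\Gamma_{\theta,5}:\nu_{G^k}(M)=1\}$.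 *)

(* Defs.v *)
From Stdlib Require Import Reals ZArith.
From Coquelicot Require Import Coquelicot.

Open Scope Z_scope.

(* 2x2 integer matrices [[a, b], [c, d]] *)
Record Mat2Z := mkMat { ma : Z; mb : Z; mc : Z; md : Z }.

Definition inSL2Z (M : Mat2Z) : Prop := ma M * md M - mb M * mc M = 1.

Definition cong5 (x y : Z) : bool := Z.eqb ((x - y) mod 5) 0.

Definition congM5 (M : Mat2Z) (p q r s : Z) : bool :=
  cong5 (ma M) p && cong5 (mb M) q && cong5 (mc M) r && cong5 (md M) s.

Definition isI5 M := congM5 M 1 0 0 1.
Definition isNegI5 M := congM5 M (-1) 0 0 (-1).
Definition isS5 M := congM5 M 0 (-1) 1 0.
Definition isNegS5 M := congM5 M 0 1 (-1) 0.

Definition inGammaTheta5 (M : Mat2Z) : Prop :=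
  inSL2Z M /\ (isI5 M = true \/ isNegI5 M = true \/ isS5 M = true \/ isNegS5 M = true).

Open Scope R_scope.

(* g(M), defined by cases (the four cases are disjoint mod 5);
   the last branch is the case M = [[0,1],[-1,0]] mod 5 for M in Gamma_{theta,5}. *)
Definition gfun (M : Mat2Z) : R :=
  let a := IZR (ma M) in let b := IZR (mb M) in
  let c := IZR (mc M) in let d := IZR (md M) in
  let base := 2 * a * b / 5 + 2 * c * d / 5 in
  if isI5 M then 6 * b / 5 + base
  else if isNegI5 M then 24 * b / 5 + base
  else if isS5 M then 5 + 6 * d / 5 + base
  else 5 - 6 * d / 5 + base.

Definition cexpi (t : R) : C := (cos t, sin t).

Definition nuG (k : Z) (M : Mat2Z) : C := cexpi (PI * IZR k / 5 * gfun M).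

Definition KerNu (k : Z) (M : Mat2Z) : Prop := inGammaTheta5 M /\ nuG k M = RtoC 1.

(* Main.v *)
Require Import Defs.
From Stdlib Require Import Reals ZArith Lia Lra.
From Coquelicot Require Import Coquelicot.

Lemma cos_perZ (x : R) (j : Z) : cos (x + 2 * IZR j * PI) = cos x.
Proof.
  destruct (Z_le_gt_dec 0 j) as [H|H].
  - replace j with (Z.of_nat (Z.to_nat j)) by lia.
    rewrite <- INR_IZR_INZ. apply cos_period.
  - replace j with (- Z.of_nat (Z.to_nat (- j)))%Z by lia.
    rewrite opp_IZR, <- INR_IZR_INZ.
    set (n := Z.to_nat (-j)).
    rewrite <- (cos_period (x + 2 * - INR n * PI) n). f_equal. ring.
Qed.

Lemma cong5_ex x y : cong5 x y = true -> exists q, x = (y + 5 * q)%Z.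
Proof.
  unfold cong5. intro H. apply Z.eqb_eq in H.
  exists ((x - y) / 5)%Z. pose proof (Z_div_mod_eq_full (x - y) 5). lia.
Qed.

Lemma congM5_ex M p q r s : congM5 M p q r s = true ->
  exists a b c d, ma M = (p + 5*a)%Z /\ mb M = (q + 5*b)%Z /\
                  mc M = (r + 5*c)%Z /\ md M = (s + 5*d)%Z.
Proof.
  unfold congM5. intro H.
  repeat (apply andb_prop in H; destruct H as [H ?]).
  destruct (cong5_ex _ _ H) as [a ?].
  repeat match goal with h : cong5 _ _ = true |- _ => apply cong5_ex in h end.
  destruct H0 as [b ?], H1 as [c ?], H2 as [d ?].
  exists a, d, c, b. lia.
Qed.

Lemma nu_even k M (j : Z) : PI * IZR k / 5 * gfun M = 2 * IZR j * PI -> nuG k M = RtoC 1.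
Proof.
  intro E. unfold nuG, cexpi. rewrite E.
  replace (2 * IZR j * PI) with (0 + 2 * IZR j * PI) by ring.
  rewrite cos_perZ, cos_0.
  rewrite sin_eq_0_1. reflexivity. exists (2 * j)%Z. rewrite mult_IZR. ring.
Qed.

Lemma nu_odd k M (j : Z) : PI * IZR k / 5 * gfun M = PI + 2 * IZR j * PI -> nuG k M <> RtoC 1.
Proof.
  intros E H. unfold nuG, cexpi in H. rewrite E in H.
  injection H as H1 _. rewrite cos_perZ, cos_PI in H1. lra.
Qed.

Theorem mainTheorem10 (k : Z) (hk : (k mod 10 = 5)%Z) :
  forall M : Mat2Z,
    KerNu k M <-> (inGammaTheta5 M /\ (isI5 M = true \/ isNegI5 M = true)).
Proof.
  assert (Hk : exists m, k = (10 * m + 5)%Z).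
  { exists (k / 10)%Z. pose proof (Z_div_mod_eq_full k 10). lia. }
  destruct Hk as [m ->].
  intro M. unfold KerNu. destruct M as [a b c d].
  split.
  - intros [HG Hn]. split; [exact HG|].
    destruct HG as [_ [H|[H|[H|H]]]]; auto; exfalso.
    + assert (HI : isI5 (mkMat a b c d) = false).
      { destruct (isI5 _) eqn:E; auto. apply congM5_ex in E as (?&?&?&?&?&?&?&?); apply congM5_ex in H as (?&?&?&?&?&?&?&?); cbn [ma mb mc md] in *; lia. }
      assert (HN : isNegI5 (mkMat a b c d) = false).
      { destruct (isNegI5 _) eqn:E; auto. apply congM5_ex in E as (?&?&?&?&?&?&?&?); apply congM5_ex in H as (?&?&?&?&?&?&?&?); cbn [ma mb mc md] in *; lia. }
      pose proof H as H'. apply congM5_ex in H' as (a'&b'&c'&d'&Ea&Eb&Ec&Ed). cbn [ma mb mc md] in *.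
      refine (nu_odd _ _ ((2*m+1)*(2 + 3*d' + a'*b + c*d') + m)%Z _ Hn).
      unfold gfun. rewrite HI, HN, H. cbn [ma mb mc md]. rewrite Ea, Eb, Ec, Ed.
      repeat (rewrite ?plus_IZR, ?mult_IZR, ?opp_IZR, ?minus_IZR). field.
    + assert (HI : isI5 (mkMat a b c d) = false).
      { destruct (isI5 _) eqn:E; auto. apply congM5_ex in E as (?&?&?&?&?&?&?&?); apply congM5_ex in H as (?&?&?&?&?&?&?&?); cbn [ma mb mc md] in *; lia. }
      assert (HN : isNegI5 (mkMat a b c d) = false).
      { destruct (isNegI5 _) eqn:E; auto. apply congM5_ex in E as (?&?&?&?&?&?&?&?); apply congM5_ex in H as (?&?&?&?&?&?&?&?); cbn [ma mb mc md] in *; lia. }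
      assert (HS : isS5 (mkMat a b c d) = false).
      { destruct (isS5 _) eqn:E; auto. apply congM5_ex in E as (?&?&?&?&?&?&?&?); apply congM5_ex in H as (?&?&?&?&?&?&?&?); cbn [ma mb mc md] in *; lia. }
      pose proof H as H'. apply congM5_ex in H' as (a'&b'&c'&d'&Ea&Eb&Ec&Ed). cbn [ma mb mc md] in *.
      refine (nu_odd _ _ ((2*m+1)*(2 - 3*d' + a'*b + c*d') + m)%Z _ Hn).
      unfold gfun. rewrite HI, HN, HS. cbn [ma mb mc md]. rewrite Ea, Eb, Ec, Ed.
      repeat (rewrite ?plus_IZR, ?mult_IZR, ?opp_IZR, ?minus_IZR). field.
  - intros [HG H]. split; [exact HG|].
    destruct H as [H|H].
    + pose proof H as H'. apply congM5_ex in H' as (a'&b'&c'&d'&Ea&Eb&Ec&Ed). cbn [ma mb mc md] in *.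
      apply (nu_even _ _ ((2*m+1)*(3*b' + a*b' + c'*d))%Z).
      unfold gfun. rewrite H. cbn [ma mb mc md]. rewrite Ea, Eb, Ec, Ed.
      repeat (rewrite ?plus_IZR, ?mult_IZR, ?opp_IZR, ?minus_IZR). field.
    + assert (HI : isI5 (mkMat a b c d) = false).
      { destruct (isI5 _) eqn:E; auto. apply congM5_ex in E as (?&?&?&?&?&?&?&?); apply congM5_ex in H as (?&?&?&?&?&?&?&?); cbn [ma mb mc md] in *; lia. }
      pose proof H as H'. apply congM5_ex in H' as (a'&b'&c'&d'&Ea&Eb&Ec&Ed). cbn [ma mb mc md] in *.
      apply (nu_even _ _ ((2*m+1)*(12*b' + a*b' + c'*d))%Z).
      unfold gfun. rewrite HI, H. cbn [ma mb mc md]. rewrite Ea, Eb, Ec, Ed.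
      repeat (rewrite ?plus_IZR, ?mult_IZR, ?opp_IZR, ?minus_IZR). field.
Qed.
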